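(* Let $\kappa=\frac4{27}$. For every positive integer $n$ and every $x$ the following four identities hold: $$\frac{(3n+1)x}{\kappa}\,{}_3F_2\left[\begin{matrix}-n,\frac{n+1}2,\frac{n+2}2\\ \frac23,\frac43\end{matrix};x\right]+3\,{}_3F_2\left[\begin{matrix}-n-1,\frac{n+2}2,\frac{n+1}2\\ \frac13,\frac23\end{matrix};x\right]-6\,{}_3F_2\left[\begin{matrix}-n,\frac{n+1}2,\frac n2\\ \frac13,\frac23\end{matrix};x\right]+3\,{}_3F_2\left[\begin{matrix}-n+1,\frac n2,\frac{n-1}2\\ \frac13,\frac23\end{matrix};x\right]=0;$$ $$\frac{(n+1)(3n+2)x}{2\kappa}\,{}_3F_2\left[\begin{matrix}-n,\frac{n+3}2,\frac{n+2}2\\ \frac43,\frac53\end{matrix};x\right]+(3n+4)\,{}_3F_2\left[\begin{matrix}-n-1,\frac{n+2}2,\frac{n+3}2\\ \frac23,\frac43\end{matrix};x\right]-2(3n+1)\,{}_3F_2\left[\begin{matrix}-n,\frac{n+1}2,\frac{n+2}2\\ \frac23,\frac43\end{matrix};x\right]+(3n-2)\,{}_3F_2\left[\begin{matrix}-n+1,\frac n2,\frac{n+1}2\\ \frac23,\frac43\end{matrix};x\right]=0;$$ $$\frac{(n+1)x}{\kappa}\,{}_3F_2\left[\begin{matrix}-n,\frac{n+3}2,\frac{n+2}2\\ \frac23,\frac43\end{matrix};x\right]+{}_3F_2\left[\begin{matrix}-n-1,\frac{n+2}2,\frac{n+3}2\\ \frac13,\frac23\end{matrix};x\right]-2\,{}_3F_2\left[\begin{matrix}-n,\frac{n+1}2,\frac{n+2}2\\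 \frac13,\frac23\end{matrix};x\right]+{}_3F_2\left[\begin{matrix}-n+1,\frac n2,\frac{n+1}2\\ \frac13,\frac23\end{matrix};x\right]=0;$$ $$\frac{(n+1)(n+2)x}{2\kappa}\,{}_3F_2\left[\begin{matrix}-n,\frac{n+4}2,\frac{n+3}2\\ \frac43,\frac53\end{matrix};x\right]+(n+2)\,{}_3F_2\left[\begin{matrix}-n-1,\frac{n+4}2,\frac{n+3}2\\ \frac23,\frac43\end{matrix};x\right]-2(n+1)\,{}_3F_2\left[\begin{matrix}-n,\frac{n+3}2,\frac{n+2}2\\ \frac23,\frac43\end{matrix};x\right]+n\,{}_3F_2\left[\begin{matrix}-n+1,\frac{n+2}2,\frac{n+1}2\\ \frac23,\frac43\end{matrix};x\right]=0.$$
   Context: ${}_3F_2\left[\begin{matrix}a_1,a_2,a_3\\ b_1,b_2\end{matrix};x\right]=\sum_{k\ge0}\frac{(a_1)_k(a_2)_k(a_3)_k}{(b_1)_k(b_2)_k}\frac{x^k}{k!}$, $(x)_k=x(x+1)\cdots(x+k-1)$, $(x)_0=1$; with $a_1$ a nonpositive integer these are polynomials in $x$. *)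

(* Defs.v *)
From HB Require Import structures.
From mathcomp Require Import all_boot all_order all_algebra.
Set Implicit Arguments. Unset Strict Implicit. Unset Printing Implicit Defensive.
Import Order.TTheory GRing.Theory Num.Theory.
Local Open Scope ring_scope.

Definition poch (R : numFieldType) (a : R) (k : nat) : R :=
  \prod_(i < k) (a + i%:R).

(* Terminating 3F2 with first upper parameter a1 = -m (m : nat):
   3F2[-m, a2, a3; b1, b2; x] = sum_{k>=0} (-m)_k (a2)_k (a3)_k / ((b1)_k (b2)_k) x^k / k!.
   Since (-m)_k = 0 for k > m, the series is the finite sum over k = 0..m. *)
Definition F32 (R : numFieldType) (m : nat) (a2 a3 b1 b2 x : R) : R :=
  \sum_(k < m.+1)
    poch (- m%:R) k * poch a2 k * poch a3 k / (poch b1 k * poch b2 k)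
    * x ^+ k / (k`!)%:R.

Definition kappa (R : numFieldType) : R := 4 / 27.

(* Main.v *)
Require Import Defs.
From HB Require Import structures.
From mathcomp Require Import all_boot all_order all_algebra.
From mathcomp Require Import ring.
Import Order.TTheory GRing.Theory Num.Theory.
Local Open Scope ring_scope.
Set Implicit Arguments. Unset Strict Implicit.
Section S.
Variable R : numFieldType.

Definition term (m : nat) (a2 a3 b1 b2 : R) (k : nat) : R :=
  poch (- m%:R) k * poch a2 k * poch a3 k / (poch b1 k * poch b2 k) / (k`!)%:R.

Lemma poch0 (a : R) : poch a 0 = 1.
Proof. by rewrite /poch big_ord0. Qed.

Lemma pochSr (a : R) j : poch a j.+1 = poch a j * (a + j%:R).
Proof. by rewrite /poch big_ord_recr. Qed.

Lemma pochSl (a b : R) j : a + 1 = b -> poch a j.+1 = a * poch b j.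
Proof.
move=> <-; rewrite /poch big_ord_recl /= addr0; congr (_ * _).
by apply: eq_bigr => i _; rewrite /bump /= add1n -addrA -natr1 (addrC 1).
Qed.

Lemma poch_gt0 (a : R) j : 0 < a -> 0 < poch a j.
Proof.
move=> a0; rewrite /poch; apply: prodr_gt0 => i _.
exact: ltr_wpDr (ler0n _ _) a0.
Qed.

Lemma poch_neq0 (a : R) j : 0 < a -> poch a j != 0.
Proof. by move=> a0; rewrite gt_eqF // poch_gt0. Qed.

Lemma poch_negn (m k : nat) : (m < k)%N -> poch (- (m%:R) : R) k = 0.
Proof.
move=> mk; rewrite /poch (bigD1 (Ordinal mk)) //= addNr mul0r //.
Qed.

Lemma term0 m (a2 a3 b1 b2 : R) : term m a2 a3 b1 b2 0 = 1.
Proof. by rewrite /term !poch0 !mul1r invr1 /= mulr1. Qed.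

Lemma F32_ext m (a2 a3 b1 b2 x : R) L : (m < L)%N ->
  F32 m a2 a3 b1 b2 x = \sum_(k < L) term m a2 a3 b1 b2 k * x ^+ k.
Proof.
move=> mL; rewrite /F32 (eq_bigr (fun k : 'I_m.+1 => term m a2 a3 b1 b2 k * x ^+ k)); last first.
  by move=> i _; rewrite /term mulrAC.
rewrite (big_ord_widen L (fun k => term m a2 a3 b1 b2 k * x ^+ k)) //.
rewrite big_mkcond /=; apply: eq_bigr => i _.
case: ifP => ilt //.
rewrite /term poch_negn ?mul0r //.
by rewrite ltnNge -ltnS ilt.
Qed.

Lemma comb (n : nat) (x c d cb cd ce : R)
  (a2 a3 b1 b2 p2 p3 q1 q2 r2 r3 s1 s2 u2 u3 v1 v2 : R) :
  cb - cd + ce = 0 ->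
  (forall k, c / d * term n.+1 a2 a3 b1 b2 k + cb * term n.+2 p2 p3 q1 q2 k.+1
      - cd * term n.+1 r2 r3 s1 s2 k.+1 + ce * term n u2 u3 v1 v2 k.+1 = 0) ->
  c * x / d * F32 n.+1 a2 a3 b1 b2 x + cb * F32 n.+2 p2 p3 q1 q2 x
    - cd * F32 n.+1 r2 r3 s1 s2 x + ce * F32 n u2 u3 v1 v2 x = 0.
Proof.
move=> H0 Hk.
rewrite (F32_ext _ _ _ _ _ (L := n.+2)) // (F32_ext _ _ _ _ _ (L := n.+3)) //.
rewrite (F32_ext _ _ _ _ _ (L := n.+3)) // (F32_ext _ _ _ _ _ (L := n.+3)) //.
rewrite !(big_ord_recl n.+2) !term0 !expr0 !mulr1.
have -> : forall (y : R) (f g h i : 'I_n.+2 -> R),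
  y * x / d * \sum_(k < n.+2) f k + cb * (1 + \sum_(k < n.+2) g k)
   - cd * (1 + \sum_(k < n.+2) h k) + ce * (1 + \sum_(k < n.+2) i k) =
  (cb - cd + ce) + \sum_(k < n.+2) (y * x / d * f k + cb * g k - cd * h k + ce * i k).
  move=> y f g h i; rewrite !big_split /= -!mulr_sumr sumrN -mulr_sumr.
  ring.
rewrite H0 add0r big1 // => i _.
rewrite /bump /= !exprS.
have := Hk i; set A := term _ _ _ _ _ i; set B := term _ _ _ _ _ _; set C := term _ _ _ _ _ _.
set D := term _ _ _ _ _ _ => Hi.
transitivity (x * x ^+ i * (c / d * A + cb * B - cd * C + ce * D)); first ring.
  by rewrite Hi mulr0.
by rewrite ltnS leqW // leqnSn.
Qed.




Lemma pos_add (a b : R) : 0 < a -> 0 <= b -> a + b != 0.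
Proof. by move=> a0 b0; rewrite gt_eqF // ltr_pwDl. Qed.



Lemma pnz (a : R) (k : nat) : 0 < a -> a + k%:R != 0.
Proof. by move=> a0; rewrite gt_eqF // ltr_wpDr. Qed.

Lemma pochD (n k : nat) : 
  poch (- (n%:R) : R) k.+1 = poch (- (n.+1%:R)) k * (- n.+1%:R + k%:R) * (- n.+1%:R + k%:R + 1) / (- n.+1%:R).
Proof.
set N := (n.+1%:R : R).
have hN : (- N) != 0 by rewrite oppr_eq0 pnatr_eq0.
have e : - N * poch (- n%:R) k.+1 = poch (- N) k.+2.
  by rewrite (pochSl (a := - N) (b := - n%:R)) // /N -natr1; ring.
rewrite -[poch (- n%:R) k.+1](mulKf hN) e !pochSr -natr1.
by rewrite mulrC addrA.
Qed.

End S.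
Unset Implicit Arguments. Set Strict Implicit.
Ltac side := repeat (apply/andP; split);
  try (apply: poch_neq0; by rewrite ?divr_gt0 ?ltr0n);
  try (by rewrite pnatr_eq0 -lt0n fact_gt0);
  try (by rewrite pnatr_eq0);
  try (apply: pos_add; by rewrite ?mulr_ge0 ?ler0n ?ltr0n ?divr_gt0);
  try (rewrite addrC; apply: pos_add; by rewrite ?mulr_ge0 ?ler0n ?ltr0n ?divr_gt0).

Theorem proposition8 (R : numFieldType) (n : nat) (x : R) :
  (0 < n)%N ->
  let N := n%:R : R in
  [/\
   (3 * N + 1) * x / kappa R
       * F32 n ((N + 1) / 2) ((N + 2) / 2) (2 / 3) (4 / 3) x
     + 3 * F32 n.+1 ((N + 2) / 2) ((N + 1) / 2) (1 / 3) (2 / 3) x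
     - 6 * F32 n ((N + 1) / 2) (N / 2) (1 / 3) (2 / 3) x
     + 3 * F32 n.-1 (N / 2) ((N - 1) / 2) (1 / 3) (2 / 3) x = 0,
   (N + 1) * (3 * N + 2) * x / (2 * kappa R)
       * F32 n ((N + 3) / 2) ((N + 2) / 2) (4 / 3) (5 / 3) x
     + (3 * N + 4) * F32 n.+1 ((N + 2) / 2) ((N + 3) / 2) (2 / 3) (4 / 3) x
     - 2 * (3 * N + 1) * F32 n ((N + 1) / 2) ((N + 2) / 2) (2 / 3) (4 / 3) x
     + (3 * N - 2) * F32 n.-1 (N / 2) ((N + 1) / 2) (2 / 3) (4 / 3) x = 0,
   (N + 1) * x / kappa R
       * F32 n ((N + 3) / 2) ((N + 2) / 2) (2 / 3) (4 / 3) x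
     + F32 n.+1 ((N + 2) / 2) ((N + 3) / 2) (1 / 3) (2 / 3) x
     - 2 * F32 n ((N + 1) / 2) ((N + 2) / 2) (1 / 3) (2 / 3) x
     + F32 n.-1 (N / 2) ((N + 1) / 2) (1 / 3) (2 / 3) x = 0 &
   (N + 1) * (N + 2) * x / (2 * kappa R)
       * F32 n ((N + 4) / 2) ((N + 3) / 2) (4 / 3) (5 / 3) x
     + (N + 2) * F32 n.+1 ((N + 4) / 2) ((N + 3) / 2) (2 / 3) (4 / 3) x
     - 2 * (N + 1) * F32 n ((N + 3) / 2) ((N + 2) / 2) (2 / 3) (4 / 3) x
     + N * F32 n.-1 ((N + 2) / 2) ((N + 1) / 2) (2 / 3) (4 / 3) x = 0].
Proof.
case: n => [//|n] _ N.
have eN : N = n.+1%:R by [].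
split.
- apply: comb => [|k]; first ring.
  rewrite /term (pochD _ n k) -eN.
  rewrite (pochSl (a := - n.+2%:R) (b := - N)); last by rewrite eN; ring.
  rewrite (pochSl (a := 1/3) (b := 4/3)); last by field.
  rewrite (pochSl (a := N/2) (b := (N+2)/2)); last by field.
  rewrite (pochSl (a := (N-1)/2) (b := (N+1)/2)); last by field.
  rewrite !pochSr factS natrM /kappa eN.
  field; side.
- apply: comb => [|k]; first ring.
  rewrite /term (pochD _ n k) -eN.
  rewrite (pochSl (a := - n.+2%:R) (b := - N)); last by rewrite eN; ring.
  rewrite (pochSl (a := 2/3) (b := 5/3)); last by field.
  rewrite (pochSl (a := N/2) (b := (N+2)/2)); last by field.
  rewrite (pochSl (a := (N+1)/2) (b := (N+3)/2)); last by field.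
  rewrite !pochSr factS natrM /kappa eN.
  field; side.
- rewrite -[F32 n.+2 _ _ _ _ x]mul1r.
  rewrite -[F32 n.+1.-1 _ _ _ _ x]mul1r.
  apply: comb => [|k]; first ring.
  rewrite /term (pochD _ n k) -eN.
  rewrite (pochSl (a := - n.+2%:R) (b := - N)); last by rewrite eN; ring.
  rewrite (pochSl (a := 1/3) (b := 4/3)); last by field.
  rewrite (pochSl (a := N/2) (b := (N+2)/2)); last by field.
  rewrite (pochSl (a := (N+1)/2) (b := (N+3)/2)); last by field.
  rewrite !pochSr factS natrM /kappa eN.
  field; side.
- apply: comb => [|k]; first ring.
  rewrite /term (pochD _ n k) -eN.
  rewrite (pochSl (a := - n.+2%:R) (b := - N)); last by rewrite eN; ring.
  rewrite (pochSl (a := 2/3) (b := 5/3)); last by field.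
  rewrite (pochSl (a := (N+2)/2) (b := (N+4)/2)); last by field.
  rewrite (pochSl (a := (N+1)/2) (b := (N+3)/2)); last by field.
  rewrite !pochSr factS natrM /kappa eN.
  field; side.
Qed.
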